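(* Let $N$ be a positive integer and $\alpha>1$ with $\alpha N\in\mathbb{N}$. Then $\mathrm{TFF}(\alpha,N)=\mathrm{TFF}(\tilde\alpha,\tilde N)$, where $1/\alpha+1/\tilde\alpha=1$ and $\tilde N=N(\alpha-1)$.
   Context: For a positive integer $N$, $\mathrm{TFF}(\alpha,N)$ is the set of weakly decreasing sequences of positive integers $(L_1,\ldots,L_K)$ such that there exist orthogonal projections $P_1,\ldots,P_K$ on $\mathbb{R}^N$ with $\operatorname{rank}P_i=L_i$ and $\sum_{i=1}^K P_i=\alpha\mathbf I$. *)

(* Defs.v *)
From HB Require Import structures.
From mathcomp Require Import all_boot all_order all_algebra.
From mathcomp Require Import reals.
Set Implicit Arguments. Unset Strict Implicit. Unset Printing Implicit Defensive.
Import Order.TTheory GRing.Theory Num.Theory.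
Local Open Scope ring_scope.

Definition orth_proj (R : realType) (n : nat) (P : 'M[R]_n) : Prop :=
  P *m P = P /\ P^T = P.

Definition TFF (R : realType) (alpha : R) (N : nat) (L : seq nat) : Prop :=
  sorted geq L /\ all (fun l => 0 < l)%N L /\
  exists P : 'I_(size L) -> 'M[R]_N,
    (forall i, orth_proj (P i)) /\
    (forall i : 'I_(size L), \rank (P i) = nth 0%N L i) /\
    \sum_(i < size L) P i = alpha%:M.

(* Main.v *)
Require Import Defs.
From HB Require Import structures.
From mathcomp Require Import all_boot all_order all_algebra.
From mathcomp Require Import reals.
From mathcomp Require Import ring lra.
From Stdlib Require Import IndefiniteDescription.
Import Order.TTheory GRing.Theory Num.Theory.
Local Open Scope ring_scope.

Section Aux.
Variable R : realType.

Lemma proj_ex n (P : 'M[R]_n) : P *m P = P -> P^T = P ->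
  exists m (U : 'M[R]_(n, m)), U^T *m U = 1%:M /\ U *m U^T = P.
Proof.
move: {2}(\rank P) (leqnn (\rank P)) => k; elim: k n P => [|k IH] n P hr PP Pt.
  have P0 : P = 0 by apply/eqP; rewrite -mxrank_eq0 -leqn0.
  exists 0%N, 0; split; last by rewrite mul0mx P0.
  by apply/matrixP => -[i hi]; exfalso; move: hi; rewrite ltn0.
case: (eqVneq P 0) => [P0|Pn0].
  exists 0%N, 0; split; last by rewrite mul0mx P0.
  by apply/matrixP => -[i hi]; exfalso; move: hi; rewrite ltn0.
have [i [j Pij]] : exists i j, P i j != 0.
  case: (boolP [exists i, [exists j, P i j != 0]]) => [/existsP[i /existsP[j h]]|h].
    by exists i, j.
  exfalso; move/eqP: Pn0; apply; apply/matrixP => a b; rewrite mxE; apply/eqP.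
  apply: contraNT h => hab; apply/existsP; exists a; apply/existsP; exists b; done.
pose v := col j P.
pose d := (v^T *m v) 0 0.
have dE : d = \sum_l P l j ^+ 2 by rewrite /d mxE; apply: eq_bigr => l _; rewrite !mxE expr2.
have d0 : 0 < d.
  rewrite dE (bigD1 i) //=.
  have h1 : 0 < P i j ^+ 2 by rewrite lt0r sqrf_eq0 Pij sqr_ge0.
  have h2 : 0 <= \sum_(l | l != i) P l j ^+ 2 by apply: sumr_ge0 => l _; exact: sqr_ge0.
  lra.
have vtv : v^T *m v = d%:M by rewrite [LHS]mx11_scalar.
pose s := Num.sqrt d.
have s0 : 0 < s by rewrite sqrtr_gt0.
have ss : s * s = d by rewrite -expr2 sqr_sqrtr // ltW.
pose u := s^-1 *: v.
have utu : u^T *m u = 1%:M.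
  have -> : (s^-1 *: v)^T = s^-1 *: v^T by apply/matrixP => a b; rewrite !mxE.
  rewrite -scalemxAl -scalemxAr vtv !scale_scalar_mx; congr (_%:M).
  rewrite -ss; field; exact: lt0r_neq0.
have Pv : P *m v = v by rewrite /v colE mulmxA PP.
have Pu : P *m u = u by rewrite /u -scalemxAr Pv.
have uP : u^T *m P = u^T by rewrite -{1}Pt -trmx_mul Pu.
pose P' := P - u *m u^T.
have P'P : P' *m P = P' by rewrite /P' mulmxBl PP -mulmxA uP.
have P'u : P' *m u = 0 by rewrite /P' mulmxBl Pu -mulmxA utu mulmx1 subrr.
have P'P' : P' *m P' = P'.
  by rewrite {2}/P' mulmxBr P'P mulmxA P'u mul0mx subr0.
have P't : P'^T = P' by rewrite /P' linearB /= trmx_mul trmxK Pt.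
have rP' : (\rank P' <= k)%N.
  rewrite -ltnS; apply: leq_trans hr; apply: rank_ltmx; rewrite ltmxE.
  rewrite -{1}P'P submxMl /=; apply/negP => /submxP [D hD].
  have : u = 0 by rewrite -Pu hD -mulmxA P'u mulmx0.
  move=> u0; move: utu; rewrite u0 mulmx0 => /matrixP /(_ 0 0); rewrite !mxE /=.
  by move/eqP; rewrite eq_sym oner_eq0.
have [m [U' [hU1 hU2]]] := IH _ _ rP' P'P' P't.
have h1 : U'^T *m u = 0.
  have : U'^T = U'^T *m P' by rewrite -hU2 mulmxA hU1 mul1mx.
  by move=> ->; rewrite -mulmxA P'u mulmx0.
have h2 : u^T *m U' = 0 by rewrite -(trmxK U') -trmx_mul h1 trmx0.
exists (1 + m)%N, (row_mx u U'); split.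
  by rewrite tr_row_mx mul_col_row utu h1 h2 hU1 [RHS]scalar_mx_block.
by rewrite tr_row_mx mul_row_col hU2 /P' addrC subrK.
Qed.

Lemma rank_iso m k (V : 'M[R]_(m, k)) (c : R) : c != 0 -> V^T *m V = c%:M ->
  \rank (V *m V^T) = k.
Proof.
move=> c0 hV; apply/eqP; rewrite eqn_leq; apply/andP; split.
  exact: leq_trans (mxrankM_maxr _ _) (rank_leq_row _).
have h : V^T *m (V *m V^T) *m V = (c * c)%:M.
  by rewrite !mulmxA hV -mulmxA hV mul_scalar_mx scale_scalar_mx.
have hr : \rank ((c * c)%:M : 'M[R]_k) = k.
  by rewrite -scalemx1 mxrank_scale_nz ?mxrank1 // mulf_neq0.
rewrite -{1}hr -h; exact: leq_trans (mxrankM_maxl _ _) (mxrankM_maxr _ _).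
Qed.

Lemma proj_exact n (P : 'M[R]_n) : P *m P = P -> P^T = P ->
  exists U : 'M[R]_(n, \rank P), U^T *m U = 1%:M /\ U *m U^T = P.
Proof.
move=> PP Pt; have [m [U [h1 h2]]] := @proj_ex _ _ PP Pt.
have e : \rank P = m by rewrite -h2 (@rank_iso _ _ _ 1) ?oner_eq0.
by rewrite e; exists U.
Qed.

Lemma submxblock_lin (p : nat) (p_ : 'I_p -> nat) (A B : 'M[R]_(\sum_i p_ i))
  (a : R) i j :
  submxblock (A - a *: B) i j = submxblock A i j - a *: submxblock B i j.
Proof. by apply/matrixP => k l; rewrite !mxE. Qed.

Lemma submxblock1 (p : nat) (p_ : 'I_p -> nat) i :
  submxblock (1%:M : 'M[R]_(\sum_i p_ i)) i i = 1%:M.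
Proof.
apply/matrixP => k l; rewrite !mxE.
have h := tagnat.eq_Rank k l; rewrite eqxx andTb in h.
have e : (tagnat.Rank i k == tagnat.Rank i l) = (k == l) := h.
by rewrite e.
Qed.

End Aux.

Lemma tff_dir (R : realType) (N : nat) (alpha alphat : R) (Nt : nat) (L : seq nat) :
  1 < alpha -> alpha^-1 + alphat^-1 = 1 -> Nt%:R = N%:R * (alpha - 1) ->
  TFF alpha N L -> TFF alphat Nt L.
Proof.
move=> a1 hinv hNt [hs [hpos [P [hP [hr hsum]]]]]; split=> //; split=> //.
have a0 : alpha != 0 by apply: lt0r_neq0; apply: lt_trans a1.
have hc : alphat^-1 = 1 - alpha^-1 by rewrite -hinv addrAC subrr add0r.
have c0 : 0 < 1 - alpha^-1.
  by rewrite subr_gt0 invf_lt1 // (lt_trans _ a1).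
have at0 : alphat != 0 by rewrite -invr_eq0 hc lt0r_neq0.
pose q (i : 'I_(size L)) := nth 0%N L i.
have hU : forall i, exists U : 'M[R]_(N, q i), U^T *m U = 1%:M /\ U *m U^T = P i.
  by move=> i; rewrite /q -hr; case: (hP i) => PP Pt; exact: proj_exact.
pose U i := proj1_sig (constructive_indefinite_description _ (hU i)).
have hU1 i : (U i)^T *m U i = 1%:M /\ U i *m (U i)^T = P i :=
  proj2_sig (constructive_indefinite_description _ (hU i)).
pose W := \mxrow_i U i.
have WWt : W *m W^T = alpha%:M.
  rewrite tr_mxrow mul_mxrow_mxcol -hsum; apply: eq_bigr => i _; by case: (hU1 i).
have WtW : W^T *m W = \mxblock_(i, j) ((U i)^T *m U j).
  by rewrite tr_mxrow mul_mxcol_mxrow.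
have WtWWtW : W^T *m W *m (W^T *m W) = alpha *: (W^T *m W).
  by rewrite !mulmxA -(mulmxA W^T W W^T) WWt mul_mx_scalar -scalemxAl.
pose H := alpha^-1 *: (W^T *m W).
have HH : H *m H = H.
  rewrite /H -scalemxAl -scalemxAr WtWWtW !scalerA; congr (_ *: _).
  by rewrite -mulrA mulVf // mulr1.
pose G := 1%:M - H.
have GG : G *m G = G by rewrite /G mulmxBl mul1mx mulmxBr mulmx1 HH subrr subr0.
have Gt : G^T = G by rewrite /G linearB /= trmx1 linearZ /= trmx_mul trmxK.
have [r [Z0 [hZ1 hZ2]]] := @proj_ex _ _ _ GG Gt.
have trP i : \tr (P i) = (q i)%:R.
  by case: (hU1 i) => h1 <-; rewrite mxtrace_mulC h1 mxtrace1.
have hM : (\sum_i q i)%:R = alpha * N%:R.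
  rewrite natr_sum; under eq_bigr do rewrite -trP.
  by rewrite -raddf_sum hsum /= mxtrace_scalar mulr_natr.
have trG : \tr G = r%:R by rewrite -hZ2 mxtrace_mulC hZ1 mxtrace1.
have trG' : \tr G = (\sum_i q i)%:R - N%:R.
  rewrite /G /H raddfB /= mxtraceZ mxtrace1 mxtrace_mulC WWt mxtrace_scalar.
  by rewrite -[alpha *+ N]mulr_natr mulrA mulVf // mul1r.
have er : r = Nt.
  apply/eqP; rewrite -(eqr_nat R) -trG trG' hM hNt; apply/eqP; ring.
subst Nt.
pose Z := Z0^T.
pose Zi i := submxrow Z i.
have ZZt : Z *m Z^T = 1%:M by rewrite /Z trmxK.
have ZtZ : Z^T *m Z = G by rewrite /Z trmxK.
have blk i : (Zi i)^T *m Zi i = alphat^-1%:M.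
  have e1 : submxblock (Z^T *m Z) i i = (Zi i)^T *m Zi i.
    by rewrite -{1 2}(submxrowK Z) tr_mxrow mul_mxcol_mxrow mxblockK.
  rewrite -e1 ZtZ /G /H submxblock_lin submxblock1 WtW mxblockK.
  by case: (hU1 i) => -> _; rewrite scalemx1 hc raddfB.
pose Q i := alphat *: (Zi i *m (Zi i)^T).
exists Q; split; [|split].
- move=> i; split.
    rewrite /Q -scalemxAl -scalemxAr !mulmxA -(mulmxA (Zi i)) blk mul_mx_scalar.
    rewrite -scalemxAl !scalerA; congr (_ *: _).
    by rewrite mulfV // mulr1.
  by rewrite /Q linearZ /= trmx_mul trmxK.
- move=> i; rewrite /Q mxrank_scale_nz //.
  by apply: (@rank_iso R _ _ (Zi i) alphat^-1 _ (blk i)); rewrite invr_eq0.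
- rewrite /Q -scaler_sumr -mul_mxrow_mxcol -tr_mxrow /Zi submxrowK ZZt.
  by rewrite scalemx1.
Qed.

Theorem corollary2p7 (R : realType) (N : nat) (alpha : R)
  (alphat : R) (Nt : nat) :
  (0 < N)%N -> 1 < alpha ->
  (exists m : nat, alpha * N%:R = m%:R) ->
  alpha^-1 + alphat^-1 = 1 ->
  Nt%:R = N%:R * (alpha - 1) ->
  forall L : seq nat, TFF alpha N L <-> TFF alphat Nt L.
Proof.
move=> N0 a1 _ hinv hNt L; split; first exact: tff_dir.
have a0 : alpha != 0 by apply: lt0r_neq0; apply: lt_trans a1.
have a10 : alpha - 1 != 0 by rewrite subr_eq0 gt_eqF.
have hc : alphat^-1 = 1 - alpha^-1 by rewrite -hinv addrAC subrr add0r.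
have c0 : 0 < 1 - alpha^-1.
  by rewrite subr_gt0 invf_lt1 // (lt_trans _ a1).
have hat : alphat = (1 - alpha^-1)^-1 by rewrite -hc invrK.
apply: tff_dir.
- by rewrite hat invf_gt1 // gtrDl oppr_lt0 invr_gt0 (lt_trans _ a1).
- by rewrite addrC.
- rewrite hNt hat; field.
  by rewrite a0 a10.
Qed.
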